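(* Let $\beta$ be a nonstandard hypernatural number and $T$ a $\beta$-tree. Then for every $s\in T/st(T)$ there exists $X\in[\mathbb{N}]^\infty$ with $s\sqsubseteq X$ such that $[s,X]\subseteq[T]$.
   Context: Setting (Alpha-Theory of Benci–Di Nasso): ZFC together with a new symbol $\alpha$ satisfying: ($\alpha$1) every sequence $\varphi=\langle\varphi_i:i\in\mathbb{N}\rangle$ has a unique ideal value $\varphi[\alpha]$; ($\alpha$2) if $\varphi[\alpha]=\psi[\alpha]$ and $f\circ\varphi$, $f\circ\psi$ make sense then $(f\circ\varphi)[\alpha]=(f\circ\psi)[\alpha]$; ($\alpha$3) constant real sequences $r$ have ideal value $r$, and $\langle i\rangle$ has ideal value $\alpha\notin\mathbb{N}$; ($\alpha$4) if $\vartheta_i=\{\varphi_i,\psi_i\}$ then $\vartheta[\alpha]=\{\varphi[\alpha],\psi[\alpha]\}$; ($\alpha$5) the constant sequence $\emptyset$ has ideal value $\emptyset$, and for nonempty $\psi_i$, $\psi[\alpha]=\{\vartheta[\alpha]:\vartheta_i\in\psi_i\ \forall i\}$. ${}^*A$ is the ideal value of the constant sequence $A$; elements of ${}^*\mathbb{N}\setminus\mathbb{N}$ are nonstandard hypernatural numbers. For finite $s$ and $X\subseteq\mathbb{N}$, $s\sqsubseteq X$ means $s=\{j\in X:j\le i\}$ for some $i$; $[s,X]=\{Y\in[\mathbb{N}]^\infty:s\sqsubseteq Y\subseteq X\}$. A tree on $\mathbb{N}$ is a nonempty $T\subseteq[\mathbb{N}]^{<\infty}$ closed under $\sqsubseteq$-initial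 segments; $[T]=\{X\in[\mathbb{N}]^\infty:$ every finite $s\sqsubseteq X$ is in $T\}$; stem $st(T)$ = $\sqsubseteq$-maximal $s\in T$ comparable with all elements of $T$; $T/s=\{t\in T:s\sqsubseteq t\}$. A $\beta$-tree is a tree $T$ with a stem, $T/st(T)\neq\emptyset$, and $s\cup\{\beta\}\in{}^*T$ for all $s\in T/st(T)$. *)

(* Defs.v *)
From mathcomp Require Import all_boot.
From mathcomp Require Export boolp classical_sets cardinality.
Set Implicit Arguments. Unset Strict Implicit. Unset Printing Implicit Defensive.
Local Open Scope classical_set_scope.

(* alpha is modelled by an ultrafilter U on nat (U_alpha = {A | alpha in *A});
   ideal values of sequences are their classes modulo U. *)
Definition is_ultrafilter (U : set (set nat)) : Prop :=
  U setT /\ ~ U set0 /\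
  (forall A B, U A -> A `<=` B -> U B) /\
  (forall A B, U A -> U B -> U (A `&` B)) /\
  (forall A, U A \/ U (~` A)).

(* alpha is not in N: the ultrafilter is nonprincipal *)
Definition nonprincipal (U : set (set nat)) : Prop := forall n, ~ U [set n].

(* a hypernatural beta = f[alpha], f : nat -> nat; beta is nonstandard iff
   it differs from every standard n, i.e. {i | f i = n} is not in U *)
Definition nonstandard (U : set (set nat)) (f : nat -> nat) : Prop :=
  forall n : nat, ~ U [set i | f i = n].

Definition initseg (s X : set nat) : Prop :=
  exists i : nat, s = [set j | X j /\ (j <= i)%N].

Definition ellentuck (s X : set nat) : set (set nat) :=
  [set Y | infinite_set Y /\ initseg s Y /\ Y `<=` X].

Definition is_tree (T : set (set nat)) : Prop :=
  (exists t, T t) /\ (forall t, T t -> finite_set t) /\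
  (forall t s, T t -> initseg s t -> T s).

Definition body (T : set (set nat)) : set (set nat) :=
  [set X | infinite_set X /\ (forall s, finite_set s -> initseg s X -> T s)].

Definition comparable_all (T : set (set nat)) (s : set nat) : Prop :=
  forall t, T t -> initseg s t \/ initseg t s.

Definition is_stem (T : set (set nat)) (s : set nat) : Prop :=
  T s /\ comparable_all T s /\
  (forall s', T s' -> comparable_all T s' -> initseg s s' -> s' = s).

Definition tree_above (T : set (set nat)) (s : set nat) : set (set nat) :=
  [set t | T t /\ initseg s t].

(* s ∪ {beta} ∈ *T, with beta = f[alpha]:  {i | s ∪ {f i} ∈ T} ∈ U *)
Definition star_T_contains_ext (U : set (set nat)) (f : nat -> nat)
    (T : set (set nat)) (s : set nat) : Prop :=
  U [set i | T (s `|` [set f i])].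

Definition beta_tree (U : set (set nat)) (f : nat -> nat) (T : set (set nat)) : Prop :=
  is_tree T /\
  exists s0, is_stem T s0 /\ (exists t, tree_above T s0 t) /\
    (forall s, tree_above T s0 s -> star_T_contains_ext U f T s).

(* Main.v *)
Require Import Defs.
From mathcomp Require Import all_boot boolp classical_sets cardinality.
Local Open Scope classical_set_scope.

Definition bnd (B : nat) (L : seq nat) := foldr maxn B L.

Lemma bnd_ge B L : (B <= bnd B L)%N /\ forall x, x \in L -> (x <= bnd B L)%N.
Proof.
elim: L => [|y L [IH1 IH2]] /=; first by split.
split; first by rewrite leq_max IH1 orbT.
move=> x; rewrite inE => /orP[/eqP->|xL]; first by rewrite leq_max leqnn.
by rewrite leq_max IH2 ?orbT.
Qed.

Lemma finite_bounded (A : set nat) : finite_set A -> exists B, forall x, A x -> (x <= B)%N.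
Proof.
move=> /finite_seqP [L ->]; exists (bnd 0 L) => x /= xL.
by apply: (bnd_ge 0 L).2.
Qed.

Lemma U_nonempty U A : is_ultrafilter U -> U A -> exists x : nat, A x.
Proof.
move=> [_ [H0 _]] UA; case: (pselect (exists x, A x)) => // nA; exfalso; apply: H0.
have -> : (set0 : set nat) = A; last by [].
apply: funext => x; apply: propext; split => // Ax; apply: nA; by exists x.
Qed.

Lemma U_big U f : is_ultrafilter U -> nonstandard U f -> forall m, U [set i | (m < f i)%N].
Proof.
move=> HU Hb; have [_ [_ [Hup [Hcap Hcpl]]]] := HU.
have Hne : forall n, U (~` [set i | f i = n]).
  by move=> n; case: (Hcpl [set i | f i = n]) => // /Hb.
elim => [|m IH].
  apply: (Hup _ _ (Hne 0)) => i /=; by case: (f i).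
apply: (Hup _ _ (Hcap _ _ IH (Hne m.+1))) => i /= [h1 h2].
by rewrite ltn_neqAle h1 andbT; apply/eqP => E; apply: h2.
Qed.
From mathcomp Require Import zify.
Lemma Qlem U f T s0 : is_ultrafilter U ->
 (forall s, tree_above T s0 s -> star_T_contains_ext U f T s) ->
 forall (L : seq nat) R, (forall t, t `<=` [set x | x \in L] -> tree_above T s0 (R `|` t)) ->
 U [set i | forall t, t `<=` [set x | x \in L] -> T (R `|` t `|` [set f i])].
Proof.
move=> HU Hb; have [_ [_ [Hup [Hcap _]]]] := HU.
elim => [|x L IH] R HR.
  have := Hb _ (HR set0 (sub0set _)); rewrite /star_T_contains_ext setU0 => H.
  apply: (Hup _ _ H) => i /= Ti t tL.
  have -> : t = set0 by apply: funext => y; apply: propext; split => // /tL.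
  by rewrite setU0.
have sub1 : forall t, t `<=` [set y | y \in L] -> t `<=` [set y | y \in x :: L].
  by move=> t tL y /tL /= yL; rewrite inE yL orbT.
have H1 := IH R (fun t tL => HR t (sub1 t tL)).
have sub2 : forall t, t `<=` [set y | y \in L] -> (t `|` [set x]) `<=` [set y | y \in x :: L].
  move=> t tL y [/tL /= yL|/= ->]; by rewrite inE ?yL ?eqxx ?orbT.
have H2 : U [set i | forall t, t `<=` [set y | y \in L] -> T (R `|` [set x] `|` t `|` [set f i])].
  apply: IH => t tL.
  have -> : R `|` [set x] `|` t = R `|` (t `|` [set x]) by rewrite -setUA (setUC [set x]).
  exact: HR (sub2 t tL).
apply: (Hup _ _ (Hcap _ _ H1 H2)) => i [/= Hi1 Hi2] t tL.
case: (pselect (t x)) => tx.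
  have tL' : (t `\` [set x]) `<=` [set y | y \in L].
    move=> y [/tL /=]; rewrite inE => /orP[/eqP -> //|//].
  have := Hi2 _ tL'.
  suff -> : R `|` [set x] `|` (t `\` [set x]) = R `|` t by [].
  rewrite -setUA; congr (R `|` _); apply: funext => y; apply: propext; split.
    by move=> [->|[]].
  by move=> ty; case: (pselect (y = x)) => [->|yx]; [left|right].
apply: Hi1 => y ty; have := tL y ty; rewrite /= inE => /orP[/eqP E|//].
by move: tx; rewrite -E.
Qed.


Definition Pnext (T : set (set nat)) (s : set nat) (B : nat) (L : seq nat) (x : nat) : Prop :=
  (bnd B L < x)%N /\ forall t, t `<=` [set y | y \in L] -> T (s `|` t `|` [set x]).

Fixpoint Ls (P : seq nat -> set nat) (n : nat) : seq nat :=
  match n with 0 => [::] | n.+1 => xget 0 (P (Ls P n)) :: Ls P n end.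

Lemma stem_unique T a b : is_stem T a -> is_stem T b -> a = b.
Proof.
move=> [Ta [Ca Ma]] [Tb [Cb Mb]].
case: (Ca b Tb) => h; first by rewrite (Ma b Tb Cb h).
by rewrite (Mb a Ta Ca h).
Qed.

Theorem mainTheorem18 (U : set (set nat)) (f : nat -> nat)
  (HU : is_ultrafilter U) (HUnp : nonprincipal U) (Hbeta : nonstandard U f)
  (T : set (set nat)) (HT : beta_tree U f T) :
  forall s0, is_stem T s0 ->
  forall s, tree_above T s0 s ->
  exists X : set nat, infinite_set X /\ initseg s X /\ ellentuck s X `<=` body T.
Proof.
move=> s0 Hs0 s [Ts [i0 Hi0]].
have [[_ [Tfin Tcl]] [s1 [Hs1 [_ Hb]]]] := HT.
rewrite -(@stem_unique T s0 s1 Hs0 Hs1) in Hb.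
have [Bs HBs] := finite_bounded _ (Tfin s Ts).
set B := maxn Bs i0.
have BsB : (Bs <= B)%N by rewrite leq_maxl.
have i0B : (i0 <= B)%N by rewrite leq_maxr.
pose good (L : seq nat) := (forall x, x \in L -> B < x)%N /\
   forall t, t `<=` [set y | y \in L] -> T (s `|` t).
have goodA : forall L, good L -> forall t, t `<=` [set y | y \in L] -> tree_above T s0 (s `|` t).
  move=> L [g1 g2] t tL; split; first exact: g2.
  exists i0; rewrite Hi0; apply: funext => j; apply: propext; split.
    by move=> [sj ji]; split => //; left.
  move=> [[sj|tj] ji] //; have := g1 _ (tL _ tj); lia.
have ex : forall L, good L -> exists x, Pnext T s B L x.
  move=> L gL; have [_ [_ [Hup [Hcap _]]]] := HU.
  have HQ := Qlem _ _ _ _ HU Hb L s (goodA L gL).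
  have [i [Hi1 Hi2]] := U_nonempty _ _ HU (Hcap _ _ HQ (U_big _ _ HU Hbeta (bnd B L))).
  by exists (f i); split.
set P := Pnext T s B.
pose a m := xget 0 (P (Ls P m)).
have LsS : forall m, Ls P m.+1 = a m :: Ls P m by [].
have gall : forall n, good (Ls P n) /\ P (Ls P n) (a n).
  elim => [|n [gn Pn]].
    have g0 : good (Ls P 0).
      split => // t t0; have -> : t = set0 by apply: funext => y; apply: propext; split => // /t0.
      by rewrite setU0.
    by split => //; apply: xgetPex; apply: ex.
  have gn1 : good (Ls P n.+1).
    rewrite LsS; have [Pn1 Pn2] := Pn; have [g1 g2] := gn; split.
      move=> x; rewrite inE => /orP[/eqP ->|xL]; last exact: g1.
      have := (bnd_ge B (Ls P n)).1; lia.
    move=> t tL; case: (pselect (t (a n))) => tx.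
      have tL' : (t `\` [set a n]) `<=` [set y | y \in Ls P n].
        move=> y [/tL /=]; rewrite inE => /orP[/eqP -> //|//].
      have := Pn2 _ tL'.
      suff -> : s `|` (t `\` [set a n]) `|` [set a n] = s `|` t by [].
      rewrite -setUA; congr (s `|` _); apply: funext => y; apply: propext; split.
        by move=> [[]|->].
      by move=> ty; case: (pselect (y = a n)) => [->|yx]; [right|left].
    apply: g2 => y ty; have := tL y ty; rewrite /= inE => /orP[/eqP E|//].
    by move: tx; rewrite -E.
  by split => //; apply: xgetPex; apply: ex.
have F2 : forall n x, x \in Ls P n -> exists m, (m < n)%N /\ x = a m.
  elim => [|n IH] x //; rewrite LsS inE => /orP[/eqP ->|/IH [m [mn ->]]].
    by exists n.
  by exists m; split => //; lia.
have F2' : forall n m, (m < n)%N -> a m \in Ls P n.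
  elim => [|n IH] m // mn; rewrite LsS inE; case: (ltnP m n) => h.
    by rewrite IH ?orbT.
  have -> : m = n by lia.
  by rewrite eqxx.
have Ba : forall m, (B < a m)%N.
  move=> m; have [_ [h _]] := gall m; have := (bnd_ge B (Ls P m)).1; lia.
have Fm : forall m, (m < a m)%N.
  elim => [|m IH]; first by have := Ba 0; lia.
  have [_ [h _]] := gall m.+1.
  have := (bnd_ge B (Ls P m.+1)).2 (a m) (F2' _ _ (ltnSn m)); lia.
pose A := [set x | exists m, x = a m].
exists (s `|` A); split; [|split].
- move=> fin; have [Bd HBd] := finite_bounded _ (sub_finite_set (@subsetUr _ s A) fin).
  have := HBd (a Bd) (ex_intro _ Bd erefl); have := Fm Bd; lia.
- exists B; apply: funext => j; apply: propext; split.
    by move=> sj; split; [left|have := HBs j sj; lia].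
  by move=> [[sj|[m ->]] jB] //; have := Ba m; lia.
move=> Y [Yinf [[i Hi] YX]]; split => // u finu [k Hk].
have sj : forall j, s j <-> Y j /\ (j <= i)%N by move=> j; rewrite {1}Hi.
case: (leqP k i) => ki.
  apply: (Tcl s) => //; exists k; rewrite Hk; apply: funext => j; apply: propext; split.
    by move=> [Yj jk]; split => //; apply/sj; split => //; lia.
  by move=> [/sj [Yj _] jk].
pose t := [set j | Y j /\ (i < j)%N /\ (j <= k)%N].
have tL : t `<=` [set y | y \in Ls P k].
  move=> j [Yj [ij jk]]; case: (YX j Yj) => [/sj [_ ji]|[m jm]]; first lia.
  rewrite /= jm; apply: F2'; have := Fm m; lia.
have -> : u = s `|` t.
  rewrite Hk; apply: funext => j; apply: propext; split.
    move=> [Yj jk]; case: (leqP j i) => ji; first by left; apply/sj.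
    by right.
  by move=> [/sj [Yj ji]|[Yj [_ jk]]]; split => //; lia.
exact: (gall k).1.2 t tL.
Qed.
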